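(* If a $\mathsf{BST}^{\otimes}$-conjunction $\Phi$ is fulfilled by a finite accessible $\otimes$-graph, then $\Phi$ is satisfiable.
   Context: Sets range over the von Neumann universe of well-founded sets. For sets $s,t$, $s\otimes t=\{\{u,v\} : u\in s,\ v\in t\}$. A $\mathsf{BST}^{\otimes}$-conjunction is a finite conjunction of literals of the forms $x=y\cup z$, $x=y\setminus z$, $x=y\otimes z$, $x\neq y$; it is satisfiable if some set assignment $M$ on its variables makes all literals true when each variable $v$ is interpreted as $Mv$. A $\otimes$-graph $\mathcal G=(\mathcal P,\mathcal N,\mathcal T)$ consists of a set $\mathcal P$ of places, the set of nodes $\mathcal N=\mathcal P\otimes\mathcal P$ (the nonempty subsets of $\mathcal P$ with at most two elements), $\mathcal P\cap\mathcal N=\emptyset$, and a target map $\mathcal T:\mathcal N\to\mathcal P(\mathcal P)$. A source place is a place belonging to no $\mathcal T(A)$. The accessible places form the smallest set of places containing all source places and containing $\mathcal T(A)$ whenever all places of the node $A$ belong to it; $\mathcal G$ is accessible if every place is accessible. A map $\mathfrak F:\mathrm{Vars}(\Phi)\to\mathcal P(\mathcal P)$ is $\mathcal G$-fulfilling for $\Phi$ if: (a) $\mathfrak F(x)=\mathfrak F(y)\star\mathfrak F(z)$ for each conjunct $x=y\star z$, $\star\in\{\cup,\setminus\}$; (b) $\mathfrak F(x)\neq\mathfrak F(y)$ for each conjunct $x\neq y$; (c) for each conjunct $x=y\otimes z$: (c1) $\emptyset\neq\mathcal T(\{\upsilon,\zeta\})\subseteq\mathfrak F(x)$ for all $\upsilon\in\mathfrak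 F(y),\zeta\in\mathfrak F(z)$; (c2) $\mathfrak F(x)\subseteq\bigcup\{\mathcal T(A):A\in\mathfrak F(y)\otimes\mathfrak F(z)\}$; (c3) $\bigcup\{\mathcal T(A):A\in\mathcal N\setminus(\mathfrak F(y)\otimes\mathfrak F(z))\}\cap\mathfrak F(x)=\emptyset$. $\mathcal G$ fulfills $\Phi$ if such a map exists. *)

(* Defs.v *)
(* finite places via finType / {set _}; sets of the
   von Neumann universe modelled by Aczel's well-founded sets. *)
From Stdlib Require Lists.List.
From mathcomp Require Import all_boot.
Set Implicit Arguments. Unset Strict Implicit. Unset Printing Implicit Defensive.

Inductive WFSet : Type := mkset (A : Type) (f : A -> WFSet).

Definition idx (x : WFSet) : Type := let: mkset A _ := x in A.
Definition elt (x : WFSet) : idx x -> WFSet :=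
  match x as x0 return idx x0 -> WFSet with mkset _ f => f end.

Fixpoint seteq (x y : WFSet) : Prop :=
  match x, y with
  | mkset A f, mkset B g =>
      (forall a, exists b, seteq (f a) (g b)) /\
      (forall b, exists a, seteq (f a) (g b))
  end.

Definition setin (u x : WFSet) : Prop := exists a : idx x, seteq u (elt a).

Definition setU (s t : WFSet) : WFSet :=
  mkset (fun i : idx s + idx t =>
           match i with inl a => elt a | inr b => elt b end).

Definition setD (s t : WFSet) : WFSet :=
  mkset (fun a : {a : idx s | ~ setin (elt a) t} => elt (proj1_sig a)).

Definition setpair (u v : WFSet) : WFSet :=
  mkset (fun b : bool => if b then u else v).

Definition setotimes (s t : WFSet) : WFSet :=
  mkset (fun p : idx s * idx t => setpair (elt p.1) (elt p.2)).

Inductive literal : Type :=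
  | LUnion of nat & nat & nat
  | LDiff of nat & nat & nat
  | LOtimes of nat & nat & nat
  | LNeq of nat & nat.

Definition conjunction := seq literal.

Definition lit_holds (M : nat -> WFSet) (l : literal) : Prop :=
  match l with
  | LUnion x y z => seteq (M x) (setU (M y) (M z))
  | LDiff x y z => seteq (M x) (setD (M y) (M z))
  | LOtimes x y z => seteq (M x) (setotimes (M y) (M z))
  | LNeq x y => ~ seteq (M x) (M y)
  end.

Definition satisfiable (Phi : conjunction) : Prop :=
  exists M : nat -> WFSet, forall l, Stdlib.Lists.List.In l Phi -> lit_holds M l.

Section Graph.
Variable P : finType.

Definition potimes (S U : {set P}) : {set {set P}} :=
  [set [set u; v] | u in S, v in U].

Definition nodes : {set {set P}} := potimes setT setT.

Variable T : {set P} -> {set P}.   (* target map (only its values on nodes matter) *)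

Definition source_place (p : P) : Prop := forall A, A \in nodes -> p \notin T A.

Inductive accessible_place : P -> Prop :=
  | acc_src p : source_place p -> accessible_place p
  | acc_step A p : A \in nodes -> (forall q, q \in A -> accessible_place q) ->
                   p \in T A -> accessible_place p.

Definition accessible_graph : Prop := forall p, accessible_place p.

Definition lit_fulfilled (F : nat -> {set P}) (l : literal) : Prop :=
  match l with
  | LUnion x y z => F x = F y :|: F z
  | LDiff x y z => F x = F y :\: F z
  | LNeq x y => F x <> F y
  | LOtimes x y z =>
      [/\ (forall u v, u \in F y -> v \in F z ->
              T [set u; v] != set0 /\ T [set u; v] \subset F x),
          F x \subset \bigcup_(A in potimes (F y) (F z)) T A
        & [disjoint \bigcup_(A in nodes :\: potimes (F y) (F z)) T A & F x]]
  end.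

Definition fulfilling (Phi : conjunction) (F : nat -> {set P}) : Prop :=
  forall l, Stdlib.Lists.List.In l Phi -> lit_fulfilled F l.

Definition fulfills (Phi : conjunction) : Prop := exists F, fulfilling Phi F.
End Graph.

(* Main.v *)
Require Import Defs.
From mathcomp Require Import all_boot.
From mathcomp Require Import zify.
From Stdlib Require Import Classical Lia.
Set Implicit Arguments. Unset Strict Implicit. Unset Printing Implicit Defensive.

Lemma seteq_refl x : seteq x x.
Proof. elim: x => A f IH /=; split=> a; exists a; exact: IH. Qed.

Lemma seteq_sym x y : seteq x y -> seteq y x.
Proof.
elim: x y => A f IH [B g] /= [H1 H2]; split.
- move=> b; case: (H2 b) => a Ha; exists a; exact: IH.
- move=> a; case: (H1 a) => b Hb; exists b; exact: IH.
Qed.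

Lemma seteq_trans x y z : seteq x y -> seteq y z -> seteq x z.
Proof.
elim: x y z => A f IH [B g] [C h] /= [H1 H2] [H3 H4]; split.
- move=> a; case: (H1 a) => b Hb; case: (H3 b) => c Hc; exists c; exact: IH Hb Hc.
- move=> c; case: (H4 c) => b Hb; case: (H2 b) => a Ha; exists a; exact: IH Ha Hb.
Qed.

Fixpoint zn (n : nat) : WFSet :=
  match n with
  | 0 => mkset (fun v : Empty_set => match v with end)
  | S k => mkset (fun _ : unit => zn k) end.

Lemma zn_inj a b : seteq (zn a) (zn b) -> a = b.
Proof.
elim: a b => [|a IH] [|b] //=.
- by case=> _ /(_ tt) [[]].
- by case=> /(_ tt) [[]].
- case=> /(_ tt) [_ H] _; by rewrite (IH b H).
Qed.

Lemma seteq_mk A B (f : A -> WFSet) (g : B -> WFSet) : seteq (mkset f) (mkset g) <->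
  (forall a, exists b, seteq (f a) (g b)) /\ (forall b, exists a, seteq (f a) (g b)).
Proof. by []. Qed.

Arguments seteq : simpl never.
Arguments zn : simpl never.

Definition marker (m : nat) : WFSet :=
  mkset (fun o : option (option bool) => match o with
    | None => zn 0 | Some None => zn 1 | Some (Some true) => zn 2
    | Some (Some false) => zn (m.+3) end).

Lemma marker_inj m m' : seteq (marker m) (marker m') -> m = m'.
Proof.
case/seteq_mk=> /(_ (Some (Some false))) [b Hb] _.
by case: b Hb => [[[]|]|] Hb; simpl in Hb; have := zn_inj Hb; lia.
Qed.

Lemma zn_same i j t : seteq (zn i) t -> seteq (zn j) t -> i = j.
Proof. move=> H1 H2; apply: zn_inj; exact: seteq_trans H1 (seteq_sym H2). Qed.

Lemma marker_not_pair m a b : ~ seteq (marker m) (setpair a b).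
Proof.
case/seteq_mk=> H _.
have [b0 H0] := H None; have [b1 H1] := H (Some None);
have [b2 H2] := H (Some (Some true)).
case: b0 b1 b2 H0 H1 H2 => [] [] [] /= H0 H1 H2;
first [ have E := zn_same H0 H1 | have E := zn_same H0 H2 | have E := zn_same H1 H2 ];
discriminate E.
Qed.

Lemma setpair_swap a b : seteq (setpair a b) (setpair b a).
Proof.
apply/seteq_mk; split=> x; exists (~~ x); case: x => /=; exact: seteq_refl.
Qed.

Lemma setpair_inv a b a' b' : seteq (setpair a b) (setpair a' b') ->
  (seteq a a' /\ seteq b b') \/ (seteq a b' /\ seteq b a').
Proof.
case/seteq_mk=> H1 H2.
have [[] Ha] := H1 true; have [[] Hb] := H1 false; rewrite /= in Ha Hb.
- right; split => //.
  have [[] Hx] := H2 false; rewrite /= in Hx => //.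
  exact: seteq_trans (seteq_trans Ha (seteq_sym Hb)) Hx.
- by left.
- by right.
- left; split => //.
  have [[] Hx] := H2 true; rewrite /= in Hx => //.
  exact: seteq_trans (seteq_trans Ha (seteq_sym Hb)) Hx.
Qed.

Inductive code := Mark of nat | Pr of code & code.
Fixpoint interp (c : code) : WFSet :=
  match c with Mark m => marker m | Pr c1 c2 => setpair (interp c1) (interp c2) end.

Section Constr.
Variable P : finType.
Variable T : {set P} -> {set P}.

Definition srcb (p : P) : bool :=
  [forall A : {set P}, (A \in nodes P) ==> (p \notin T A)].

Definition pinfo (o1 o2 : option (P * nat)) : option (P * nat) :=
  match o1, o2 with
  | Some (q1, n1), Some (q2, n2) =>
      let S := T [set q1; q2] in
      if #|S| == 0 then None
      else Some (nth q1 (enum S) ((n1 + n2) %% #|S|), (n1 + n2) %/ #|S|)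
  | _, _ => None end.

Definition minfo (m : nat) : option (P * nat) :=
  if [pick p | (nat_of_ord (enum_rank p) == m %% #|P|) && srcb p] is Some p
  then Some (p, m %/ #|P|) else None.

Fixpoint info (c : code) : option (P * nat) :=
  match c with
  | Mark m => minfo m
  | Pr c1 c2 => pinfo (info c1) (info c2)
  end.

Lemma pinfoC o1 o2 : pinfo o1 o2 = pinfo o2 o1.
Proof.
case: o1 => [[q1 n1]|]; case: o2 => [[q2 n2]|] //=.
rewrite setUC addnC; case: ifP => // H; congr (Some (_, _)).
apply: set_nth_default; rewrite -cardE ltn_pmod // lt0n; exact: negbT.
Qed.

Lemma info_resp c c' : seteq (interp c) (interp c') -> info c = info c'.
Proof.
elim: c c' => [m|c1 IH1 c2 IH2] [m'|c1' c2'].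
- by move/marker_inj ->.
- by move/marker_not_pair.
- by move/seteq_sym/marker_not_pair.
- case/setpair_inv => [[/IH1 E1 /IH2 E2]|[/IH1 E1 /IH2 E2]] /=; rewrite E1 E2 //.
  exact: pinfoC.
Qed.

Definition hit p N := forall n, N <= n -> exists c, info c = Some (p, n).

Lemma src_hit p : srcb p -> hit p 0.
Proof.
move=> Hs n _; exists (Mark (n * #|P| + enum_rank p)) => /=.
have Hp : 0 < #|P| by apply/card_gt0P; exists p.
rewrite /minfo modnMDl modn_small ?ltn_ord // divnMDl // divn_small ?ltn_ord // addn0.
case: pickP => [q /andP[Hq _]|/(_ p)]; last by rewrite eqxx Hs.
by move/eqP/val_inj/enum_rank_inj: Hq => ->.
Qed.

Lemma nodesP A : A \in nodes P -> exists u v, A = [set u; v].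
Proof. by case/imset2P => u v _ _ ->; exists u, v. Qed.

Lemma acc_hit p : accessible_place T p -> exists N, hit p N.
Proof.
elim => [q Hq | A q HA _ IH HqA].
- exists 0; apply: src_hit; apply/forallP => A; apply/implyP => HA; exact: Hq.
- have [u [v EA]] := nodesP HA; subst A.
  have [Nu Hu] := IH u (set21 u v); have [Nv Hv] := IH v (set22 u v).
  set S := T [set u; v].
  have kpos : 0 < #|S| by apply/card_gt0P; exists q.
  set k := #|S|.
  set j := index q (enum S).
  have jk : j < k by rewrite /j /k cardE index_mem mem_enum.
  exists (Nu + Nv) => n Hn.
  have [c1 Hc1] := Hu Nu (leqnn _).
  have Hn2 : Nv <= n * k + j - Nu.
    have : n <= n * k by rewrite leq_pmulr.
    lia.
  have [c2 Hc2] := Hv _ Hn2.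
  exists (Pr c1 c2) => /=; rewrite Hc1 Hc2 /= -/S -/k.
  have -> : Nu + (n * k + j - Nu) = n * k + j.
    have : n <= n * k by rewrite leq_pmulr.
    lia.
  rewrite (negbTE (lt0n_neq0 kpos)) modnMDl modn_small // divnMDl // divn_small // addn0.
  by rewrite /j nth_index // mem_enum.
Qed.

End Constr.

Section Main.
Variable P : finType.
Variable T : {set P} -> {set P}.
Variable F : nat -> {set P}.

Definition memb x c : bool :=
  if info T c is Some (p, _) then p \in F x else false.

Definition Mdl x : WFSet := mkset (fun s : {c : code | memb x c} => interp (sval s)).

Lemma memb_resp x c c' : seteq (interp c) (interp c') -> memb x c = memb x c'.
Proof. by rewrite /memb => /info_resp ->. Qed.

Lemma union_ok x y z : F x = F y :|: F z -> seteq (Mdl x) (Defs.setU (Mdl y) (Mdl z)).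
Proof.
move=> E; apply/seteq_mk; split.
- case=> c Hc /=; case Hy: (memb y c).
  + by exists (inl (exist _ c Hy)); exact: seteq_refl.
  + have Hz : memb z c.
      by move: Hc Hy; rewrite /memb; case: (info T c) => [[p n]|] //; rewrite E in_setU => /orP[->|].
    by exists (inr (exist _ c Hz)); exact: seteq_refl.
- case=> [[c Hc]|[c Hc]].
  + have Hx : memb x c by move: Hc; rewrite /memb; case: (info T c) => [[p n]|] //; rewrite E in_setU => ->.
    by exists (exist _ c Hx); exact: seteq_refl.
  + have Hx : memb x c by move: Hc; rewrite /memb; case: (info T c) => [[p n]|] //; rewrite E in_setU => ->; rewrite orbT.
    by exists (exist _ c Hx); exact: seteq_refl.
Qed.

Lemma diff_ok x y z : F x = F y :\: F z -> seteq (Mdl x) (Defs.setD (Mdl y) (Mdl z)).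
Proof.
move=> E; apply/seteq_mk; split.
- case=> c Hc /=.
  have Hy : memb y c by move: Hc; rewrite /memb; case: (info T c) => [[p n]|] //; rewrite E in_setD => /andP[].
  have Hz : ~ setin (interp c) (Mdl z).
    case=> [[c' Hc']] /= /(memb_resp z); rewrite Hc'.
    by move: Hc; rewrite /memb; case: (info T c) => [[p n]|] //; rewrite E in_setD => /andP[/negbTE ->].
  by exists (exist _ (exist _ c Hy) Hz); exact: seteq_refl.
- case=> [[c Hy] Hz] /=.
  have Hx : memb x c.
    move: Hy Hz; rewrite /memb /=; case Hi: (info T c) => [[p n]|] // Hp Hz.
    rewrite E in_setD Hp andbT; apply/negP => Hpz; apply: Hz.
    have Hm : memb z c by rewrite /memb Hi.
    by exists (exist _ c Hm); exact: seteq_refl.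
  by exists (exist _ c Hx); exact: seteq_refl.
Qed.

Lemma set2_eq (q1 q2 u v : P) : [set q1; q2] = [set u; v] ->
  (q1 = u /\ q2 = v) \/ (q1 = v /\ q2 = u).
Proof.
move=> E.
have h1 : q1 \in [set u; v] by rewrite -E set21.
have h2 : q2 \in [set u; v] by rewrite -E set22.
have h3 : u \in [set q1; q2] by rewrite E set21.
have h4 : v \in [set q1; q2] by rewrite E set22.
move: h1 h2 h3 h4; rewrite !inE.
by do 4 case/orP=> /eqP ?; subst; auto.
Qed.

Lemma pot_nodes A S U : A \in potimes S U -> A \in nodes P.
Proof. by case/imset2P => u v _ _ ->; apply/imset2P; exists u v; rewrite ?inE. Qed.

Lemma otimes_ok x y z : lit_fulfilled T F (LOtimes x y z) ->
  seteq (Mdl x) (setotimes (Mdl y) (Mdl z)).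
Proof.
case=> H1 H2 H3; apply/seteq_mk; split.
- case=> c Hc /=.
  case: c Hc => [m|c1 c2] Hc.
  + exfalso; move: Hc; rewrite /memb /= /minfo; case: pickP => // p /andP[_ Hs] Hp.
    case/bigcupP: (subsetP H2 p Hp) => A HA HpA.
    by have := implyP (forallP Hs A) (pot_nodes HA); rewrite HpA.
  + move: Hc; rewrite /memb /=.
    case E1: (info T c1) => [[q1 n1]|] //; case E2: (info T c2) => [[q2 n2]|] //=.
    case: ifP => // Hk Hp.
    set p := nth _ _ _ in Hp.
    have HpS : p \in T [set q1; q2].
      by rewrite -mem_enum; apply: mem_nth; rewrite -cardE ltn_pmod // lt0n Hk.
    have Hpot : [set q1; q2] \in potimes (F y) (F z).
      apply/negPn/negP => Hn; have := disjointFl H3 Hp; rewrite (_ : (p \in _) = true) //.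
      apply/bigcupP; exists [set q1; q2] => //.
      by rewrite in_setD Hn /=; apply/imset2P; exists q1 q2; rewrite ?inE.
    case/imset2P: Hpot => u v Hu Hv /set2_eq [[? ?]|[? ?]]; subst.
    * have m1 : memb y c1 by rewrite /memb E1.
      have m2 : memb z c2 by rewrite /memb E2.
      by exists (exist _ c1 m1, exist _ c2 m2); exact: seteq_refl.
    * have m1 : memb y c2 by rewrite /memb E2.
      have m2 : memb z c1 by rewrite /memb E1.
      by exists (exist _ c2 m1, exist _ c1 m2); exact: setpair_swap.
- case=> [[c1 m1] [c2 m2]] /=.
  have Hm : memb x (Pr c1 c2).
    move: m1 m2; rewrite /memb /=.
    case E1: (info T c1) => [[u n1]|] //; case E2: (info T c2) => [[v n2]|] // Hu Hv /=.
    have [Hne Hsub] := H1 _ _ Hu Hv.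
    rewrite cards_eq0 (negbTE Hne); apply: (subsetP Hsub).
    rewrite -mem_enum; apply: mem_nth; rewrite -cardE ltn_pmod // lt0n cards_eq0 //.
  by exists (exist _ (Pr c1 c2) Hm); exact: seteq_refl.
Qed.

Lemma neq_ok x y : accessible_graph T -> F x <> F y -> ~ seteq (Mdl x) (Mdl y).
Proof.
move=> Hacc Hne.
have [p Hp] : exists p, (p \in F x) != (p \in F y).
  apply: NNPP => Hn; apply: Hne; apply/setP => p.
  case: (boolP ((p \in F x) == (p \in F y))) => [/eqP//|H]; exfalso; apply: Hn; by exists p.
have [N HN] := acc_hit (Hacc p); have [c Hc] := HN N (leqnn N).
move=> Heq; case Hpx: (p \in F x) in Hp.
- have Hm : memb x c by rewrite /memb Hc.
  case/seteq_mk: Heq => H1 _; have [[c' Hc'] /= E] := H1 (exist _ c Hm).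
  move: (memb_resp y E); rewrite Hc' /memb Hc => Hpy; by rewrite Hpy in Hp.
- have Hm : memb y c by rewrite /memb Hc; move: Hp; case: (p \in F y).
  case/seteq_mk: Heq => _ H2; have [[c' Hc'] /= E] := H2 (exist _ c Hm).
  by move: (memb_resp x E); rewrite Hc' /memb Hc Hpx.
Qed.

End Main.

Theorem mainTheorem7 (Phi : conjunction) (P : finType) (T : {set P} -> {set P}) :
  accessible_graph T -> fulfills T Phi -> satisfiable Phi.
Proof.
move=> Hacc [F HF]; exists (Mdl T F) => l Hl; have := HF l Hl.
case: l {Hl} => [x y z|x y z|x y z|x y] H /=.
- exact: union_ok.
- exact: diff_ok.
- exact: otimes_ok.
- exact: neq_ok.
Qed.
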